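(* Let $\mathbf D_0\in\mathcal D$. For any $\mathbf W\in\mathcal W_{\mathbf D_0}$, $\mathbf v\in\mathcal S^p$, $t\ge0$ and $J\subseteq\{1,\dots,p\}$, writing $\mathbf D(t)=\mathbf D(\mathbf W,\mathbf v,t)$, $$|||[\mathbf D(t)-\mathbf D_0]_J|||_2^2\le\|[\mathbf D(t)-\mathbf D_0]_J\|_F^2\le t^2\|\mathbf v_J\|_2^2,$$ $$|||(\mathbf I-\mathbf P_J(t))[\mathbf D_0]_J|||_2^2\le\|(\mathbf I-\mathbf P_J(t))[\mathbf D_0]_J\|_F^2\le t^2\|\mathbf v_J\|_2^2.$$
   Context: $\mathcal D$: real $m\times p$ matrices with unit $\ell_2$-norm columns; $\mathcal S^p$: unit sphere of $\mathbb R^p$; $\mathcal W_{\mathbf D_0}=\{\mathbf W:\mathrm{diag}(\mathbf W^\top\mathbf D_0)=\mathbf 0,\mathrm{diag}(\mathbf W^\top\mathbf W)=\mathbf 1\}$; $\mathbf D(\mathbf W,\mathbf v,t)=\mathbf D_0\mathrm{Diag}[\cos(\mathbf vt)]+\mathbf W\mathrm{Diag}[\sin(\mathbf vt)]$. For a matrix $\mathbf M$, $\mathbf M_J$ is the submatrix of columns indexed by $J$, and $\mathbf v_J$ the subvector. $\mathbf P_J(t)\in\mathbb R^{m\times m}$ is the orthogonal projector onto the span of the columns of $[\mathbf D(t)]_J$. $|||\cdot|||_2$ spectral norm. *)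

(* Defs.v *)
From HB Require Import structures.
From mathcomp Require Import all_boot all_order all_algebra.
From mathcomp Require Import all_classical all_reals all_analysis.
Set Implicit Arguments. Unset Strict Implicit. Unset Printing Implicit Defensive.
Import Order.TTheory GRing.Theory Num.Theory.
Local Open Scope ring_scope.
Local Open Scope classical_set_scope.

Section Defs.
Variable R : realType.

Definition vnorm n (x : 'cV[R]_n) : R := Num.sqrt (\sum_i x i 0 ^+ 2).

Definition frob m n (A : 'M[R]_(m, n)) : R :=
  Num.sqrt (\sum_i \sum_j A i j ^+ 2).

Definition specnorm m n (A : 'M[R]_(m, n)) : R :=
  sup [set vnorm (A *m x) | x in [set x : 'cV[R]_n | vnorm x <= 1]].

(* Columns of M indexed by J (in increasing order) *)
Definition colsJ m p (J : {set 'I_p}) (M : 'M[R]_(m, p)) : 'M[R]_(m, #|J|) :=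
  colsub (fun k : 'I_#|J| => enum_val k) M.

Definition vecJ p (J : {set 'I_p}) (v : 'cV[R]_p) : 'cV[R]_#|J| :=
  rowsub (fun k : 'I_#|J| => enum_val k) v.

Definition unit_cols m p (D : 'M[R]_(m, p)) : Prop :=
  forall j, \sum_i D i j ^+ 2 = 1.

Definition W_set m p (D0 W : 'M[R]_(m, p)) : Prop :=
  (forall j, \sum_i W i j * D0 i j = 0) /\ (forall j, \sum_i W i j ^+ 2 = 1).

Definition Dcurve m p (D0 W : 'M[R]_(m, p)) (v : 'cV[R]_p) (t : R) : 'M[R]_(m, p) :=
  D0 *m diag_mx (\row_j cos (v j 0 * t)) + W *m diag_mx (\row_j sin (v j 0 * t)).

(* P is the orthogonal projector onto the span of the columns of A:
   symmetric, idempotent, with range equal to the column space of A. *)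
Definition is_orth_proj m k (P : 'M[R]_m) (A : 'M[R]_(m, k)) : Prop :=
  P^T = P /\ P *m P = P /\ (P == A^T)%MS.

End Defs.

(* Main.v *)
Require Import Defs.
From HB Require Import structures.
From mathcomp Require Import all_boot all_order all_algebra.
From mathcomp Require Import all_classical all_reals all_analysis.
From mathcomp Require Import ring lra.
Set Implicit Arguments. Unset Strict Implicit.
Import Order.TTheory GRing.Theory Num.Theory.
Local Open Scope ring_scope.

Section Helpers.
Variable R : realType.
Local Open Scope classical_set_scope.

Lemma sin_le_id (x : R) : 0 <= x -> sin x <= x.
Proof.
move=> x0; case: (ltgtP 0 x) x0 => // [xp _|<- _]; last by rewrite sin0.
have der : forall y, y \in `]0, x[%R -> is_derive y 1 (fun z : R => z - sin z) (1 - cos y).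
  move=> y _; apply: is_deriveB.
have ct : {within `[0, x], continuous (fun z : R => z - sin z)}.
  apply: continuous_subspaceT => z; apply: continuousB => //; exact: continuous_sin.
have [c _ E] := MVT xp der ct.
rewrite -subr_ge0; move: E; rewrite sin0 subr0 subr0 => ->.
by rewrite mulr_ge0 // ?subr_ge0 ?cos_le1 // ltW.
Qed.

Lemma cos_bound_pos (x : R) : 0 <= x -> 2 * (1 - cos x) <= x ^+ 2.
Proof.
move=> x0; case: (ltgtP 0 x) x0 => // [xp _|<- _]; last by rewrite cos0 subrr mulr0 expr0n.
have derA : forall y : R, is_derive y 1 (fun z : R => z * z + 2 * cos z) (2 * (y - sin y)).
  move=> y; apply: is_derive_eq.
  idtac.
  change (y * 1 + y * 1 + 2 * - sin y = 2 * (y - sin y)); lra.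
have der : forall y, y \in `]0, x[%R -> is_derive y 1 (fun z : R => z * z + 2 * cos z) (2 * (y - sin y)).
  by move=> y _; apply: derA.
have ct : {within `[0, x], continuous (fun z : R => z * z + 2 * cos z)}.
  by apply: derivable_within_continuous => y _; case: (derA y).
have [c cI E] := MVT xp der ct.
move: E; rewrite cos0 mul0r add0r mulr1 subr0 => E.
have : 0 <= 2 * (c - sin c) * x.
  apply: mulr_ge0; last exact: ltW.
  apply: mulr_ge0 => //; rewrite subr_ge0 sin_le_id //.
  by move: cI; rewrite in_itv /= => /andP[/ltW].
rewrite -E; lra.
Qed.

Lemma cos_bound (x : R) : 2 * (1 - cos x) <= x ^+ 2.
Proof.
case: (lerP 0 x) => [|/ltW x0]; first exact: cos_bound_pos.
by rewrite -cosN -sqrrN; apply: cos_bound_pos; rewrite oppr_ge0.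
Qed.

Definition ss m n (M : 'M[R]_(m, n)) := \sum_i \sum_j M i j ^+ 2.

Lemma ss_ge0 m n (M : 'M[R]_(m, n)) : 0 <= ss M.
Proof. by apply: sumr_ge0 => i _; apply: sumr_ge0 => j _; apply: sqr_ge0. Qed.

Lemma frobE m n (M : 'M[R]_(m, n)) : frob M ^+ 2 = ss M.
Proof. by rewrite /frob sqr_sqrtr // ss_ge0. Qed.

Lemma frob_ge0 m n (M : 'M[R]_(m, n)) : 0 <= frob M.
Proof. exact: sqrtr_ge0. Qed.

Lemma CS n (a b : 'I_n -> R) :
  (\sum_i a i * b i) ^+ 2 <= (\sum_i a i ^+ 2) * (\sum_i b i ^+ 2).
Proof.
have key : \sum_i \sum_j (a i * b j - a j * b i) ^+ 2 =
   2 * ((\sum_i a i ^+ 2) * (\sum_i b i ^+ 2) - (\sum_i a i * b i) ^+ 2).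
  have -> : \sum_i \sum_j (a i * b j - a j * b i) ^+ 2 =
     \sum_i \sum_j (a i ^+ 2 * b j ^+ 2) + \sum_i \sum_j (b i ^+ 2 * a j ^+ 2)
     - 2 * \sum_i \sum_j ((a i * b i) * (a j * b j)).
    rewrite (eq_bigr (fun i => \sum_j (a i ^+ 2 * b j ^+ 2) + \sum_j (b i ^+ 2 * a j ^+ 2)
       - 2 * \sum_j ((a i * b i) * (a j * b j)))); last first.
      move=> i _; rewrite mulr_sumr -big_split -sumrB /=; apply: eq_bigr => j _; ring.
    by rewrite sumrB big_split mulr_sumr.
  have E1 : forall c d : 'I_n -> R, \sum_i \sum_j (c i * d j) = (\sum_i c i) * (\sum_i d i).
    move=> c d; rewrite mulr_suml; apply: eq_bigr => i _; by rewrite mulr_sumr.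
  rewrite !E1; ring.
have : 0 <= 2 * ((\sum_i a i ^+ 2) * (\sum_i b i ^+ 2) - (\sum_i a i * b i) ^+ 2).
  rewrite -key; apply: sumr_ge0 => i _; apply: sumr_ge0 => j _; exact: sqr_ge0.
lra.
Qed.

Lemma vnorm_mul m n (A : 'M[R]_(m, n)) (x : 'cV[R]_n) :
  vnorm (A *m x) <= frob A * vnorm x.
Proof.
rewrite /vnorm /frob -sqrtrM ?ss_ge0 // ler_sqrt; last first.
  by apply: mulr_ge0; [exact: ss_ge0 | apply: sumr_ge0 => i _; apply: sqr_ge0].
rewrite mulr_suml; apply: ler_sum => i _; rewrite mxE.
exact: (CS (fun j => A i j) (fun j => x j 0)).
Qed.

Lemma spec_frob m n (A : 'M[R]_(m, n)) : 0 <= specnorm A <= frob A.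
Proof.
set S := [set vnorm (A *m x) | x in [set x : 'cV[R]_n | vnorm x <= 1]].
have ub : ubound S (frob A).
  move=> y [x /= hx <-]; apply: le_trans (vnorm_mul A x) _.
  by rewrite -[X in _ <= X]mulr1 ler_wpM2l // frob_ge0.
have S0 : S 0.
  exists 0; rewrite /= /vnorm.
    by rewrite (eq_bigr (fun _ => 0)) ?big1 ?sqrtr0 // => i _; rewrite mxE expr0n.
  by rewrite mulmx0 (eq_bigr (fun _ => 0)) ?big1 ?sqrtr0 // => i _; rewrite mxE expr0n.
apply/andP; split.
  by apply: (ub_le_sup _ S0); exists (frob A).
by apply: ge_sup => //; exists 0.
Qed.

Lemma spec_frob2 m n (A : 'M[R]_(m, n)) : specnorm A ^+ 2 <= frob A ^+ 2.
Proof.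
have /andP[h1 h2] := spec_frob A.
rewrite ler_sqr ?nnegrE ?frob_ge0 //.
Qed.

Lemma ss_tr m n (M : 'M[R]_(m, n)) : ss M = \tr (M^T *m M).
Proof.
rewrite /ss /mxtrace exchange_big; apply: eq_bigr => j _.
by rewrite mxE; apply: eq_bigr => i _; rewrite mxE expr2.
Qed.

Lemma ss_proj m k (P : 'M[R]_m) (B : 'M[R]_(m, k)) :
  P^T = P -> P *m P = P -> ss ((1%:M - P) *m B) <= ss B.
Proof.
move=> PT PP.
set Q := 1%:M - P.
have QT : Q^T = Q by rewrite /Q linearB /= trmx1 PT.
have QQ : Q *m Q = Q.
  by rewrite /Q mulmxBl mul1mx mulmxBr mulmx1 PP subrr subr0.
have E : ss B = ss (Q *m B) + ss (P *m B).
  rewrite !ss_tr !trmx_mul QT PT -!mulmxA (mulmxA Q) QQ (mulmxA P) PP.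
  rewrite -mxtraceD -mulmxDr -mulmxDl /Q subrK mul1mx //.
by rewrite E lerDl ss_ge0.
Qed.

End Helpers.

Theorem lemma4 (R : realType) (m p : nat) (D0 W : 'M[R]_(m, p)) (v : 'cV[R]_p)
  (t : R) (J : {set 'I_p}) (P : 'M[R]_m) :
  unit_cols D0 -> W_set D0 W -> vnorm v = 1 -> 0 <= t ->
  is_orth_proj P (colsJ J (Dcurve D0 W v t)) ->
  [/\ specnorm (colsJ J (Dcurve D0 W v t - D0)) ^+ 2
        <= frob (colsJ J (Dcurve D0 W v t - D0)) ^+ 2,
      frob (colsJ J (Dcurve D0 W v t - D0)) ^+ 2 <= t ^+ 2 * vnorm (vecJ J v) ^+ 2,
      specnorm ((1%:M - P) *m colsJ J D0) ^+ 2
        <= frob ((1%:M - P) *m colsJ J D0) ^+ 2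
    & frob ((1%:M - P) *m colsJ J D0) ^+ 2 <= t ^+ 2 * vnorm (vecJ J v) ^+ 2].
Proof.
move=> hD0 [hWD hW] _ _ [PT [PP PA]].
set Dc := Dcurve D0 W v t.
have entry : forall i j, Dc i j = D0 i j * cos (v j 0 * t) + W i j * sin (v j 0 * t).
  by move=> i j; rewrite /Dc /Dcurve mxE !mul_mx_diag !mxE.
have colE : forall j, \sum_i (Dc i j - D0 i j) ^+ 2 = 2 * (1 - cos (v j 0 * t)).
  move=> j; set c := cos (v j 0 * t); set s := sin (v j 0 * t).
  have -> : \sum_i (Dc i j - D0 i j) ^+ 2 =
      (c - 1) ^+ 2 * \sum_i D0 i j ^+ 2 + 2 * (c - 1) * s * \sum_i W i j * D0 i j
      + s ^+ 2 * \sum_i W i j ^+ 2.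
    rewrite !mulr_sumr -!big_split /=; apply: eq_bigr => i _; rewrite entry -/c -/s; ring.
  rewrite hD0 hWD hW; have := cos2Dsin2 (v j 0 * t); rewrite -/c -/s; lra.
have part2 : frob (colsJ J (Dc - D0)) ^+ 2 <= t ^+ 2 * vnorm (vecJ J v) ^+ 2.
  rewrite frobE /ss exchange_big /vnorm sqr_sqrtr; last first.
    by apply: sumr_ge0 => i _; apply: sqr_ge0.
  rewrite mulr_sumr; apply: ler_sum => k _.
  have -> : \sum_i colsJ J (Dc - D0) i k ^+ 2 = \sum_i (Dc i (enum_val k) - D0 i (enum_val k)) ^+ 2.
    by apply: eq_bigr => i _; rewrite /colsJ !mxE.
  rewrite colE /vecJ !mxE; apply: le_trans (cos_bound _) _.
  by rewrite exprMn mulrC.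
have PDc : (1%:M - P) *m colsJ J Dc = 0.
  have /eqmxP PA' := PA.
  have : ((colsJ J Dc)^T <= P)%MS by rewrite PA'.
  case/submxP => X HX.
  have HA : colsJ J Dc = P *m X^T by rewrite -[colsJ J Dc]trmxK HX trmx_mul PT.
  by rewrite mulmxBl mul1mx HA mulmxA PP subrr.
have part4 : frob ((1%:M - P) *m colsJ J D0) ^+ 2 <= t ^+ 2 * vnorm (vecJ J v) ^+ 2.
  have -> : (1%:M - P) *m colsJ J D0 = (1%:M - P) *m (colsJ J D0 - colsJ J Dc).
    by rewrite mulmxBr PDc subr0.
  rewrite frobE; apply: le_trans (ss_proj _ PT PP) _.
  apply: le_trans part2; rewrite frobE /ss; rewrite le_eqVlt; apply/orP; left; apply/eqP.
  apply: eq_bigr => i _; apply: eq_bigr => k _.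
  by rewrite /colsJ !mxE -sqrrN opprB.
split => //; exact: spec_frob2.
Qed.
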